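(* For a threshold graph $G$ and an integer $d\ge0$, $\mathrm{degen}(G)\ge d$ if and only if $G$ contains a subgraph isomorphic to $K_{d+1}$.
   Context: A threshold graph on $n\ge1$ vertices is built from a base vertex $v_0$ by successively adding $v_1,\dots,v_{n-1}$, each either isolated (adjacent to no earlier vertex) or dominating (adjacent to all earlier vertices). The degeneracy of a graph $G$ is $\mathrm{degen}(G)=\max_{H}\min_{v\in V(H)}\deg_H(v)$, the maximum over nonempty induced subgraphs $H$ of $G$ of the minimum degree of $H$; equivalently, the largest $k$ such that the $k$-core of $G$ (the maximal induced subgraph of minimum degree at least $k$) is nonempty. *)

(* Defs.v *)
From mathcomp Require Import all_boot.
Set Implicit Arguments. Unset Strict Implicit. Unset Printing Implicit Defensive.

(* Threshold construction on vertices 'I_n (vertex i is v_i): the vertex v_j,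
   j >= 1, is dominating iff b j = true (then adjacent to all earlier vertices),
   isolated otherwise.  The value b 0 (base vertex) is irrelevant. *)
Definition thr_adj n (b : 'I_n -> bool) (i j : 'I_n) : bool :=
  (i != j) && b (if i < j then j else i).

Definition is_threshold (T : finType) (e : rel T) : Prop :=
  exists n : nat, exists b : 'I_n -> bool, exists f : 'I_n -> T,
    [/\ 0 < n, bijective f & forall i j, e (f i) (f j) = thr_adj b i j].

Definition deg_in (T : finType) (e : rel T) (H : {set T}) (v : T) : nat :=
  #|[set u in H | e v u]|.

Definition mindeg (T : finType) (e : rel T) (H : {set T}) : nat :=
  \big[minn/#|T|]_(v in H) deg_in e H v.

Definition degen (T : finType) (e : rel T) : nat :=
  \max_(H : {set T} | H != set0) mindeg e H.

Definition has_clique (T : finType) (e : rel T) (k : nat) : Prop :=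
  exists f : 'I_k -> T, injective f /\ forall i j, i != j -> e (f i) (f j).

(* Main.v *)
Require Import Defs.
From mathcomp Require Import all_boot.

Lemma mindeg_ge (T : finType) (e : rel T) (H : {set T}) d :
  (forall v, v \in H -> d <= deg_in e H v) -> d <= #|T| -> d <= mindeg e H.
Proof.
move=> Hv dT; rewrite /mindeg; elim/big_ind: _ => //.
  by move=> x y hx hy; rewrite leq_min hx hy.
Qed.

Lemma mindeg_le (T : finType) (e : rel T) (H : {set T}) v :
  v \in H -> mindeg e H <= deg_in e H v.
Proof.
move=> Hv; rewrite /mindeg -big_filter.
have : v \in [seq i <- index_enum T | i \in H] by rewrite mem_filter Hv mem_index_enum.
elim: [seq _ <- _ | _] => //= x s IH; rewrite in_cons big_cons => /predU1P [->|vs].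
  exact: geq_minl.
exact: leq_trans (geq_minr _ _) (IH vs).
Qed.

Lemma clique_of_set (T : finType) (e : rel T) (K : {set T}) k :
  k.+1 <= #|K| -> {in K &, forall x y, x != y -> e x y} -> has_clique e k.+1.
Proof.
move=> kK Kc.
have [x0 _] : exists2 x0, x0 \in K & True.
  by case/card_gt0P: (leq_trans (ltn0Sn k) kK) => x Kx; exists x.
have sz : size (enum K) = #|K| by rewrite cardE.
exists (fun i : 'I_k.+1 => nth x0 (enum K) i); split.
  move=> i j /eqP; rewrite nth_uniq ?enum_uniq ?sz //.
  - by move=> /eqP /val_inj.
  - exact: leq_trans (ltn_ord i) kK.
  - exact: leq_trans (ltn_ord j) kK.
move=> i j ij; apply: Kc.
- by rewrite -mem_enum mem_nth // sz (leq_trans (ltn_ord i) kK).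
- by rewrite -mem_enum mem_nth // sz (leq_trans (ltn_ord j) kK).
rewrite nth_uniq ?enum_uniq ?sz //.
- exact: leq_trans (ltn_ord i) kK.
- exact: leq_trans (ltn_ord j) kK.
Qed.

Theorem mainTheorem11 (T : finType) (e : rel T) (d : nat) :
  is_threshold e -> (d <= degen e)%N <-> has_clique e d.+1.
Proof.
move=> [n [b [f [n0 [g fK gK] He]]]].
have eE : forall x y, e x y = thr_adj b (g x) (g y).
  by move=> x y; rewrite -He !gK.
have esym : forall x y, e x y = e y x.
  move=> x y; rewrite !eE /thr_adj eq_sym.
  case: (eqVneq (g y) (g x)) => [->|ne] //=.
  case: ltngtP => // h; move: ne; by rewrite (val_inj h) eqxx.
have eb : forall x y, g x != g y -> b (g x) -> b (g y) -> e x y.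
  by move=> x y ne bx by'; rewrite eE /thr_adj ne /=; case: ifP.
split.
- move=> dle.
  have [H [H0 Hd]] : exists H : {set T}, H != set0 /\ d <= mindeg e H.
    case: d dle => [|d'] dle.
      exists setT; split => //; apply/set0Pn; exists (f (Ordinal n0)).
      by rewrite in_setT.
    case: (boolP [exists H : {set T}, (H != set0) && (d'.+1 <= mindeg e H)]).
      by move=> /existsP [H /andP [h1 h2]]; exists H.
    move=> /existsPn nH; exfalso; move: dle; apply/negP.
    rewrite -ltnNge ltnS; apply/bigmax_leqP => H HH.
    by move: (nH H); rewrite HH /= -ltnNge ltnS.
  have /set0Pn [x0 Hx0] := H0.
  case: (arg_minnP (fun x => val (g x)) Hx0) => s0 Hs0 smin.
  pose N := [set u in H | e s0 u].
  have Nprop : forall u, u \in N -> (g s0 != g u) && b (g u).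
    move=> u; rewrite inE => /andP [Hu]; rewrite eE /thr_adj => /andP [ne bb].
    have le := smin u Hu.
    have lt : (g s0 < g u)%N by rewrite ltn_neqAle le andbT.
    by rewrite ne /=; move: bb; rewrite lt.
  apply: (@clique_of_set _ _ (s0 |: N)).
    have nN : s0 \notin N by rewrite inE eE /thr_adj eqxx andbF.
    rewrite cardsU1 nN add1n ltnS.
    exact: (leq_trans Hd (@mindeg_le _ e H s0 Hs0)).
  move=> x y; rewrite !in_setU1 => /predU1P [->|xN] /predU1P [->|yN] xy.
  + by rewrite eqxx in xy.
  + by move: yN; rewrite inE => /andP [].
  + by rewrite esym; move: xN; rewrite inE => /andP [].
  + have /andP [_ bx] := Nprop _ xN; have /andP [_ by'] := Nprop _ yN.
    apply: eb => //; apply: contra xy => /eqP h.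
    by rewrite -(gK x) -(gK y) h.
- move=> [F [Finj Fadj]].
  pose H := F @: [set: 'I_d.+1].
  have cH : #|H| = d.+1 by rewrite card_imset // cardsT card_ord.
  have H0 : H != set0 by rewrite -card_gt0 cH.
  rewrite /degen; apply: leq_trans (@leq_bigmax_cond _ _ (fun H => mindeg e H) H H0).
  apply: mindeg_ge; last first.
    by apply: leq_trans (max_card (mem H)); rewrite cH.
  move=> v /imsetP [i _ ->].
  have <- : #|F @: [set~ i]| = d.
    by rewrite card_imset // cardsC1 card_ord.
  apply: subset_leq_card; apply/subsetP => u /imsetP [j]; rewrite inE => ji ->.
    have Hj : F j \in H by apply/imsetP; exists j.
    by rewrite Hj Fadj // eq_sym -in_setC1.
Qed.
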